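(* Let $r,n\ge 1$ and work in the group algebra $\mathbb{Z}[\mathsf{G}_{r,n}]$. Put $$\Phi_1:=1+\sum_{t=1}^{r-1}(1^{[t]}\,1),\qquad \Phi_j:=1+\sum_{i=1}^{j-1}(i\,j)+\sum_{t=1}^{r-1}\sum_{i=1}^{j}(i^{[t]}\,j)\quad(2\le j\le n),$$ where $(i\,j)=(i^{[0]}\,j)$. Then $$\Phi_1\Phi_2\cdots\Phi_n=\sum_{\pi\in\mathsf{G}_{r,n}}\pi .$$
   Context: $\mathsf{G}_{r,n}=C_r\wr\mathfrak{S}_n$ is the set of pairs $\pi=(\sigma,\mathbf z)$ with $\sigma\in\mathfrak S_n$ and $\mathbf z=(z_1,\dots,z_n)\in(\mathbb Z/r\mathbb Z)^n$, written as the word (window notation) $\pi=\sigma_1^{[z_1]}\sigma_2^{[z_2]}\cdots\sigma_n^{[z_n]}$; $\sigma_i$ is the base value and $z_i\in\{0,\dots,r-1\}$ the color of the $i$-th letter, colors being read modulo $r$. The product is $(\sigma,\mathbf z)(\rho,\mathbf w)=(\sigma\rho,\mathbf w+\rho(\mathbf z))$ with $\rho(\mathbf z)=(z_{\rho(1)},\dots,z_{\rho(n)})$; the identity is $12\cdots n$ with all colors $0$. For $1\le i<j\le n$ and $t\in\mathbb Z/r\mathbb Z$, $(i^{[t]}\,j)$ denotes the element such that, for every $\pi=\sigma_1^{[z_1]}\cdots\sigma_n^{[z_n]}$, the product $\pi\cdot(i^{[t]}\,j)$ is obtained from $\pi$ by replacing the letter in position $j$ by $\sigma_i^{[z_i+t]}$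 and the letter in position $i$ by $\sigma_j^{[z_j-t]}$. For $1\le i\le n$ and $0<t<r$, $(i^{[t]}\,i)$ denotes the element such that $\pi\cdot(i^{[t]}\,i)$ is obtained from $\pi$ by replacing the letter in position $i$ by $\sigma_i^{[z_i+t]}$. *)

(* Defs.v *)
From mathcomp Require Import all_boot all_order all_algebra all_fingroup.
Set Implicit Arguments. Unset Strict Implicit. Unset Printing Implicit Defensive.
Import GRing.Theory.
Local Open Scope ring_scope.

(* Colors: Z/rZ, realised as 'I_(r.-1).+1 (which has r elements for r >= 1)
   with its canonical additive structure (addition modulo r). *)
Definition col (r : nat) : finType := 'I_(r.-1).+1.

(* An element of G_{r,n} = C_r wr S_n: a pair (sigma, z) with sigma a
   permutation of the positions {0..n-1} and z the vector of colors.
   (Window notation: the i-th letter is sigma(i)^[z_i].) *)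
Definition G (r n : nat) : finType := ({perm 'I_n} * {ffun 'I_n -> col r})%type.

(* Product (sigma,z)(rho,w) = (sigma rho, w + rho(z)), rho(z) = (z_{rho 1},..,z_{rho n}),
   where sigma rho is the composite k |-> sigma (rho k).  In mathcomp,
   (rho * sigma)%g k = sigma (rho k)  (permM). *)
Definition gmul (r n : nat) (x y : G r n) : G r n :=
  let: (s, z) := x in let: (p, w) := y in
  ((p * s)%g, [ffun k => (w k + z (p k))%R : col r]).

Definition gone (r n : nat) : G r n := (1%g, [ffun _ => (0 : 'I_(r.-1).+1)]).

(* For i <> j: underlying permutation the
   transposition of positions i and j, colors -t at i, t at j, 0 elsewhere;
   right multiplication by it replaces the letter at position j by
   sigma_i^[z_i+t] and the letter at position i by sigma_j^[z_j-t].
   For i = j: identity permutation, color t at i (and 0 elsewhere);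
   right multiplication adds t to the color at position i. *)
Definition cyc (r n : nat) (i j : 'I_n) (t : col r) : G r n :=
  (tperm i j,
   [ffun k => if k == j then t else if k == i then (- t)%R else (0 : 'I_(r.-1).+1)]).

Definition galg (r n : nat) := {ffun G r n -> int}.

Definition delta (r n : nat) (g : G r n) : galg r n := [ffun h => ((h == g) : nat)%:Z].

Definition gadd (r n : nat) (a b : galg r n) : galg r n := [ffun g => a g + b g].

Definition conv (r n : nat) (a b : galg r n) : galg r n :=
  [ffun g => \sum_(h : G r n) \sum_(k : G r n | gmul h k == g) a h * b k].

Definition galg1 (r n : nat) : galg r n := delta (gone r n).

Definition gsum (r n : nat) (I : finType) (P : pred I) (F : I -> galg r n) : galg r n :=
  [ffun g => \sum_(x | P x) F x g].

(* Phi_{j+1} for a 0-based position j : 'I_n :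
   1 + sum_{i < j} (i j) + sum_{t = 1}^{r-1} sum_{i <= j} (i^[t] j).
   For j = 0 (paper's Phi_1) the first sum is empty and the second sum is
   sum_{t=1}^{r-1} (1^[t] 1), matching the paper's separate definition. *)
Definition Phi (r n : nat) (j : 'I_n) : galg r n :=
  gadd (gadd (galg1 r n)
             (gsum (fun i : 'I_n => (i < j)%N) (fun i => delta (cyc i j 0))))
       (gsum (fun p : col r * 'I_n => (p.1 != 0) && (p.2 <= j)%N)
             (fun p => delta (cyc p.2 j p.1))).

Definition Phi_prod (r n : nat) : galg r n :=
  foldr (@conv r n) (galg1 r n) [seq Phi r j | j <- enum 'I_n].

Definition gall (r n : nat) : galg r n := [ffun _ => 1%:Z].

(* Main.v *)
Require Import Defs.
From mathcomp Require Import all_boot all_order all_algebra all_fingroup.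
Set Implicit Arguments. Unset Strict Implicit. Unset Printing Implicit Defensive.
Import GRing.Theory.
Local Open Scope ring_scope.

Lemma gmulA r n (x y w : G r n) : gmul (gmul x y) w = gmul x (gmul y w).
Proof.
case: x => s z; case: y => p u; case: w => q v /=.
congr pair; first by rewrite mulgA.
by apply/ffunP => k; rewrite !ffunE permM addrA.
Qed.

Lemma gmul1 r n (x : G r n) : gmul x (gone r n) = x.
Proof.
case: x => s z /=; congr pair; first by rewrite mul1g.
by apply/ffunP => k; rewrite !ffunE perm1 add0r.
Qed.

Lemma gmul1l r n (x : G r n) : gmul (gone r n) x = x.
Proof.
case: x => s z /=; congr pair; first by rewrite mulg1.
by apply/ffunP => k; rewrite !ffunE addr0.
Qed.

Definition gdiv r n (g c : G r n) : G r n :=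
  let: (s, z) := g in let: (p, w) := c in
  ((p^-1 * s)%g, [ffun k => (z ((p^-1)%g k) - w ((p^-1)%g k))%R : Defs.col r]).

Lemma gdivK r n (h c : G r n) : gdiv (gmul h c) c = h.
Proof.
case: h => s z; case: c => p w /=; congr pair; first by rewrite mulKg.
by apply/ffunP => k; rewrite !ffunE permKV addrC addKr.
Qed.

Lemma gmulK r n (g c : G r n) : gmul (gdiv g c) c = g.
Proof.
case: g => s z; case: c => p w /=; congr pair; first by rewrite mulKVg.
by apply/ffunP => k; rewrite !ffunE permK addrC subrK.
Qed.

Lemma gmul_eq r n (h c g : G r n) : (gmul h c == g) = (h == gdiv g c).
Proof.
apply/eqP/eqP => [<-|->]; [by rewrite gdivK | by rewrite gmulK].
Qed.

Lemma posz_true : ((true : nat)%:Z) = (1%R : int). Proof. by []. Qed.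
Lemma posz_false : ((false : nat)%:Z) = (0%R : int). Proof. by []. Qed.

Lemma sum_only (T : finType) (c : T) (F : T -> int) :
  (forall x, x != c -> F x = 0) -> \sum_x F x = F c.
Proof. by move=> H; rewrite (bigD1 c) //= big1 ?addr0. Qed.

Lemma sum_delta (T : finType) (c : T) (F : T -> int) :
  \sum_k ((k == c) : nat)%:Z * F k = F c.
Proof.
rewrite (bigD1 c) //= eqxx mul1r big1 ?addr0 // => k /negbTE ->; exact: mul0r.
Qed.

Lemma conv_mk r n (a b : galg r n) g :
  conv a b g = \sum_h \sum_k ((gmul h k == g) : nat)%:Z * (a h * b k).
Proof.
rewrite ffunE; apply: eq_bigr => h _; rewrite big_mkcond; apply: eq_bigr => k _.
by case: eqP => _; rewrite ?mul1r ?mul0r.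
Qed.

Lemma convA r n (a b c : galg r n) : conv (conv a b) c = conv a (conv b c).
Proof.
apply/ffunP => g; rewrite !conv_mk.
transitivity (\sum_h \sum_k \sum_y ((gmul (gmul h k) y == g) : nat)%:Z * (a h * b k * c y)).
  rewrite exchange_big /=.
  under eq_bigr => y _ do under eq_bigr => x _ do rewrite conv_mk mulr_suml mulr_sumr.
  under eq_bigr => y _ do rewrite exchange_big /=.
  rewrite exchange_big /=; apply: eq_bigr => h _.
  under eq_bigr => y _ do under eq_bigr => x _ do rewrite mulr_suml mulr_sumr.
  under eq_bigr => y _ do rewrite exchange_big /=.
  rewrite exchange_big /=; apply: eq_bigr => k _.
  apply: eq_bigr => y _.
  rewrite (bigD1 (gmul h k)) //= eqxx mul1r big1 ?addr0 // => x.
  by rewrite eq_sym => /negbTE ->; rewrite !mul0r mulr0.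
symmetry; apply: eq_bigr => h _.
under eq_bigr => k _ do rewrite conv_mk mulr_sumr mulr_sumr.
rewrite exchange_big /=; apply: eq_bigr => x _.
under eq_bigr => k _ do rewrite mulr_sumr mulr_sumr.
rewrite exchange_big /=; apply: eq_bigr => y _.
rewrite (bigD1 (gmul x y)) //= eqxx mul1r big1 ?addr0.
  by rewrite gmulA !mulrA.
move=> k; rewrite eq_sym => /negbTE ->; by rewrite !mul0r !mulr0.
Qed.

Lemma conv1 r n (a : galg r n) : conv a (galg1 r n) = a.
Proof.
apply/ffunP => g; rewrite conv_mk.
transitivity (\sum_h ((h == g) : nat)%:Z * a h); last first.
  rewrite (bigD1 g) //= eqxx mul1r big1 ?addr0 // => h /negbTE ->; exact: mul0r.
apply: eq_bigr => h _.
rewrite (bigD1 (gone r n)) //= big1 ?addr0 ?ffunE ?eqxx ?mulr1 ?gmul1 //.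
move=> k /negbTE; rewrite ffunE => ->; by rewrite !mulr0.
Qed.

Lemma conv1l r n (a : galg r n) : conv (galg1 r n) a = a.
Proof.
apply/ffunP => g; rewrite conv_mk.
rewrite (@sum_only _ (gone r n)); last first.
  move=> h /negbTE; rewrite ffunE => ->; rewrite big1 // => k _; by rewrite posz_false mul0r mulr0.
rewrite ffunE eqxx posz_true.
under eq_bigr => k _ do rewrite gmul1l mul1r.
rewrite (@sum_only _ g) ?eqxx ?posz_true ?mul1r // => h /negbTE ->; by rewrite posz_false mul0r.
Qed.

Lemma foldr_rcons_conv r n (l : seq (galg r n)) x :
  foldr (@conv r n) (galg1 r n) (rcons l x) = conv (foldr (@conv r n) (galg1 r n) l) x.
Proof.
elim: l => [|y l IH] /=; first by rewrite conv1 conv1l.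
by rewrite IH convA.
Qed.

Lemma cyc_gone r n (j : 'I_n) : cyc j j 0 = gone r n.
Proof.
rewrite /cyc /gone tperm1; congr pair; apply/ffunP => k; rewrite !ffunE.
by case: ifP => _ //; case: ifP => _; rewrite ?oppr0.
Qed.

Lemma Phi_eq r n (j : 'I_n) k : Phi r j k =
  \sum_(p : Defs.col r * 'I_n | (p.2 <= j)%N) ((k == cyc p.2 j p.1) : nat)%:Z.
Proof.
rewrite /Phi /gadd /gsum /galg1 /delta !ffunE.
rewrite [RHS](bigID (fun p => p.1 == 0)) /=.

congr (_ + _); last first.
  by apply: eq_big => [p|p _]; [rewrite andbC | rewrite ffunE].
rewrite (eq_bigl (fun p : Defs.col r * 'I_n => (p.1 == 0) && (p.2 <= j)%N)); last by move=> p; rewrite andbC.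
have -> : \sum_(p : Defs.col r * 'I_n | (p.1 == 0) && (p.2 <= j)%N) ((k == cyc p.2 j p.1) : nat)%:Z
   = \sum_(t : Defs.col r | t == 0) \sum_(i : 'I_n | (i <= j)%N) ((k == cyc i j t) : nat)%:Z.
  by rewrite pair_big_dep.
rewrite big_pred1_eq [RHS](bigD1 j) //= cyc_gone; congr (_ + _).
apply: eq_big => [i|i _]; first by rewrite ltn_neqAle val_eqE andbC.
by rewrite ffunE.
Qed.

Definition inH r n (m : nat) (x : G r n) : bool :=
  [forall k : 'I_n, (m <= k)%N ==> (x.1 k == k) && (x.2 k == 0)].

Lemma inH_div r n (j : 'I_n) (g : G r n) (t : Defs.col r) (i : 'I_n) : (i <= j)%N ->
  inH j (gdiv g (cyc i j t)) =
  [&& inH j.+1 g, g.1 i == j & t == (if i == j then g.2 i else - g.2 i)].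
Proof.
move=> hij; case: g => s z; rewrite /inH /gdiv /cyc /=.
apply/forallP/and3P.
- move=> H.
  have := H j; rewrite leqnn /= permM tpermV tpermR ffunE tpermR ffunE eqxx.
  case/andP => /eqP sij zj.
  split.
  + apply/forallP => k; apply/implyP => jk.
    have ik : i != k by rewrite -val_eqE neq_ltn (leq_ltn_trans hij jk).
    have jk' : j != k by rewrite -val_eqE neq_ltn jk.
    have kj' : k != j by rewrite eq_sym.
    have ki : k != i by rewrite eq_sym.
    have := H k; rewrite (ltnW jk) /= permM tpermV ffunE ffunE (tpermD ik jk').
    by rewrite (negbTE kj') (negbTE ki) subr0.
  + by rewrite sij.
  + case: (eqVneq i j) zj => [eij|nij].
      by rewrite subr_eq0 eq_sym.
    by rewrite opprK addrC addr_eq0.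
- case=> /forallP H1 /eqP sij ht k; apply/implyP => jk.
  case: (eqVneq k j) => [->|kj].
    rewrite permM tpermV tpermR sij eqxx /= ffunE tpermR ffunE.
    case: (eqVneq i j) ht => [eij|nij] /eqP ->; first by rewrite subrr.
    have -> : (i == i) = true by apply/eqP.
    by rewrite opprK subrr.
  have jk' : (j < k)%N by rewrite ltn_neqAle jk andbT eq_sym val_eqE.
  have ik : i != k by rewrite -val_eqE neq_ltn (leq_ltn_trans hij jk').
  have jk2 : j != k by rewrite eq_sym.
  rewrite permM tpermV ffunE ffunE (tpermD ik jk2) (negbTE kj).
  have ki : k != i by rewrite eq_sym.
  rewrite (negbTE ki) subr0.
  exact: (implyP (H1 k) jk').
Qed.

Definition IHf r n (m : nat) : galg r n := [ffun x => (inH m x : nat)%:Z].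

Lemma count_one r n (j : 'I_n) (g : G r n) :
  \sum_(p : Defs.col r * 'I_n | (p.2 <= j)%N)
     ([&& inH j.+1 g, g.1 p.2 == j & p.1 == (if p.2 == j then g.2 p.2 else - g.2 p.2)] : nat)%:Z
  = (inH j.+1 g : nat)%:Z.
Proof.
case hg: (inH j.+1 g); last by rewrite big1.
set i0 := ((g.1)^-1)%g j.
have gi0 : g.1 i0 = j by rewrite /i0 permKV.
have i0j : (i0 <= j)%N.
  rewrite leqNgt; apply/negP => ji0.
  have := forallP hg i0; rewrite ji0 /= => /andP [/eqP e _].
  by move: ji0; rewrite -gi0 e ltnn.
rewrite big_mkcond /=.
rewrite (@sum_only _ (if i0 == j then g.2 i0 else - g.2 i0, i0)) /=.
  by rewrite i0j gi0 !eqxx.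
case=> t i ne /=; case hi: (i <= j)%N; last by [].
case: (eqVneq (g.1 i) j) => [e|] /=; last by [].
have ei : i = i0 by apply: (perm_inj (s := g.1)); rewrite gi0.
move: ne; rewrite ei /= => ne.
case: eqP => [et|] //; by rewrite et eqxx in ne.
Qed.

Lemma step r n (j : 'I_n) : conv (IHf r n j) (Phi r j) = IHf r n j.+1.
Proof.
apply/ffunP => g; rewrite conv_mk ffunE -count_one.
under eq_bigr => h _ do under eq_bigr => k _ do rewrite Phi_eq mulr_sumr mulr_sumr.
under eq_bigr => h _ do rewrite exchange_big /=.
rewrite exchange_big /=; apply: eq_bigr => [[t i]] /= hij.
rewrite -inH_div //.
transitivity (\sum_h ((h == gdiv g (cyc i j t)) : nat)%:Z * IHf r n j h).
  apply: eq_bigr => h _.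
  rewrite (@sum_only _ (cyc i j t)); last first.
    by move=> k /negbTE ->; rewrite posz_false !mulr0.
  by rewrite eqxx posz_true mulr1 gmul_eq.
rewrite (@sum_only _ (gdiv g (cyc i j t))) ?eqxx ?posz_true ?mul1r ?ffunE //.
by move=> h /negbTE ->; rewrite posz_false mul0r.
Qed.

Lemma prefix r n m : (m <= n)%N ->
  foldr (@conv r n) (galg1 r n) [seq Phi r j | j <- take m (enum 'I_n)] = IHf r n m.
Proof.
elim: m => [|m IHm] hm.
  rewrite take0 /=; apply/ffunP => x; rewrite !ffunE; congr (Posz (nat_of_bool _)).
  case: x => s z; rewrite /inH /gone; apply/eqP/forallP.
    by case=> -> -> k; rewrite perm1 ffunE !eqxx.
  move=> H; congr pair; [apply/permP => k | apply/ffunP => k];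
    have /andP [/eqP a /eqP b] := H k; by rewrite ?perm1 ?ffunE.
have mn : (m < n)%N := hm.
pose j := Ordinal mn.
rewrite (take_nth j) ?size_enum_ord // map_rcons foldr_rcons_conv IHm ?(ltnW mn) //.
have -> : nth j (enum 'I_n) m = j by apply: val_inj; rewrite /= nth_enum_ord.
exact: (step r j).
Qed.

Theorem lemma2p2 (r n : nat) (hr : (1 <= r)%N) (hn : (1 <= n)%N) :
  Phi_prod r n = gall r n.
Proof.
rewrite /Phi_prod -(take_size (enum 'I_n)) size_enum_ord prefix //.
apply/ffunP => x; rewrite !ffunE.
have -> : inH n x by apply/forallP => k; rewrite leqNgt ltn_ord.
by [].
Qed.
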